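(* Let $G$ be a median graph with $n\ge 3$ vertices in $\mathcal{U}_3$, and let $v_0$ be its unique vertex lying in every majority halfspace. Let $L$ be a nonempty pairwise orthogonal family of $\Theta$-classes each of which contains an edge incident to $v_0$, and let $V_L=\{v\in V(G)\setminus\{v_0\}: L_{v_0,v}=L\}$. Then $V_L$ is nonempty and gated.
   Context: Graphs are finite, simple, connected, undirected; $d$ is shortest-path distance; $I(u,v)=\{x:d(u,x)+d(x,v)=d(u,v)\}$; a graph is median if every triple $x,y,z$ has $|I(x,y)\cap I(y,z)\cap I(z,x)|=1$. A vertex set $H$ is gated if each vertex $v$ has a vertex $g_H(v)\in H$ with $g_H(v)\in I(v,x)$ for all $x\in H$. $\Theta$-classes: classes of the reflexive–transitive closure of the relation on edges ''opposite edges of a 4-cycle''; deleting a $\Theta$-class $E_i$ of a median graph leaves two components with vertex sets (halfspaces) $H_i',H_i''$. $\mathcal{U}_3$ is the family of median graphs with $n$ vertices in which every $\Theta$-class satisfies $\min\{|H_i'|,|H_i''|\}<n/3$; the larger halfspace is the majority halfspace. Two $\Theta$-classes $E_i,E_j$ are orthogonal if there is a 4-cycle $uvyx$ with $uv,xy\in E_i$ and $ux,vy\in E_j$; a pairwise orthogonal family (POF) is a set of pairwise orthogonal $\Theta$-classes. For $u\ne v$, the ladder set $L_{u,v}$ is the set of $\Theta$-classes $E_i$ such that $u,v$ lie in different halfspaces of $E_i$ and $u$ is an endpoint of an edge of $E_i$. *)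

(* Defs.v *)
From mathcomp Require Import all_boot.
Set Implicit Arguments. Unset Strict Implicit. Unset Printing Implicit Defensive.

Section MedianDefs.
Variables (T : finType) (e : rel T).

Definition ball (x : T) (n : nat) : {set T} :=
  iter n (fun B => B :|: [set y | [exists z in B, e z y]]) [set x].

(* shortest-path distance: least n with y in ball x n (graphs are connected,
   so n < #|T|) *)
Definition dist (x y : T) : nat := find (fun n => y \in ball x n) (iota 0 #|T|).

Definition interval (u v : T) : {set T} :=
  [set x | dist u x + dist x v == dist u v].

Definition median_graph : Prop :=
  forall x y z : T, #|interval x y :&: interval y z :&: interval z x| = 1.

Definition gated (H : {set T}) : Prop :=
  forall v, exists2 g, g \in H & forall x, x \in H -> g \in interval v x.

Definition is_edge (E : {set T}) : bool :=
  [exists u, exists v, e u v && (E == [set u; v])].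

Definition cycle4 (u v y x : T) : bool :=
  [&& e u v, e v y, e y x, e x u, u != y & v != x].

Definition opp (E F : {set T}) : bool :=
  [exists u, exists v, exists y, exists x,
     [&& cycle4 u v y x, E == [set u; v] & F == [set x; y]]].

Definition theta_class (E : {set T}) : {set {set T}} :=
  [set F | is_edge F && connect opp E F].

Definition is_theta (C : {set {set T}}) : bool :=
  [exists E, is_edge E && (C == theta_class E)].

Definition del (C : {set {set T}}) : rel T :=
  fun x y => e x y && ([set x; y] \notin C).

Definition half (C : {set {set T}}) (x : T) : {set T} :=
  [set y | connect (del C) x y].

Definition U3 : Prop :=
  forall C, is_theta C -> forall a b, e a b -> [set a; b] \in C ->
    3 * minn #|half C a| #|half C b| < #|T|.

Definition in_all_majority (v0 : T) : Prop :=
  forall C, is_theta C -> forall a b, e a b -> [set a; b] \in C ->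
    #|half C b| < #|half C a| -> v0 \in half C a.

Definition orthogonal (C D : {set {set T}}) : bool :=
  [exists u, exists v, exists y, exists x,
     [&& cycle4 u v y x, [set u; v] \in C, [set x; y] \in C,
         [set u; x] \in D & [set v; y] \in D]].

Definition POF (L : {set {set {set T}}}) : Prop :=
  (forall C, C \in L -> is_theta C) /\
  (forall C D, C \in L -> D \in L -> C != D -> orthogonal C D).

Definition ladder (u v : T) : {set {set {set T}}} :=
  [set C | [&& is_theta C, ~~ connect (del C) u v &
              [exists w, e u w && ([set u; w] \in C)]]].

Definition VL (v0 : T) (L : {set {set {set T}}}) : {set T} :=
  [set v | (v != v0) && (ladder v0 v == L)].

End MedianDefs.

(* Main.v *)
Require Import Defs.
From mathcomp Require Import all_boot zify.
Set Implicit Arguments. Unset Strict Implicit. Unset Printing Implicit Defensive.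

Section Dist.
Variables (T : finType) (e : rel T).
Hypotheses (eirr : irreflexive e) (esymm : symmetric e)
  (econ : forall x y : T, connect e x y).

Lemma ballS x n : ball e x n.+1 =
  ball e x n :|: [set y | [exists z in ball e x n, e z y]].
Proof. by []. Qed.

Lemma ball0 x : ball e x 0 = [set x].
Proof. by []. Qed.

Lemma ball_sub x n : ball e x n \subset ball e x n.+1.
Proof. by rewrite ballS subsetUl. Qed.

Lemma ball_mono x n m : n <= m -> ball e x n \subset ball e x m.
Proof.
move=> /subnK <-; elim: (m - n) => [|k IH] //=.
by apply: subset_trans IH (ball_sub _ _).
Qed.

Lemma ball_step x y z n : y \in ball e x n -> e y z -> z \in ball e x n.+1.
Proof.
move=> yb eyz; rewrite ballS inE; apply/orP; right.
by rewrite inE; apply/existsP; exists y; rewrite yb.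
Qed.

Lemma ball_trans x y z n m :
  y \in ball e x n -> z \in ball e y m -> z \in ball e x (n + m).
Proof.
move=> yb; elim: m z => [|m IH] z.
  by rewrite ball0 inE addn0 => /eqP ->.
rewrite ballS inE => /orP [/IH zb|].
  by rewrite addnS; apply: (subsetP (ball_sub _ _)).
rewrite inE => /existsP [w /andP [wb ewz]].
by rewrite addnS; apply: ball_step (IH _ wb) ewz.
Qed.

Lemma ball_sym x y n : y \in ball e x n -> x \in ball e y n.
Proof.
elim: n y => [|n IH] y.
  by rewrite !ball0 !inE eq_sym.
rewrite ballS inE => /orP [/IH yb|].
  by apply: (subsetP (ball_sub _ _)).
rewrite inE => /existsP [w /andP [wb ewy]].
have h1 : w \in ball e y 1.
  by apply: (@ball_step y y w 0); rewrite ?ball0 ?inE // esymm.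
by rewrite -add1n; apply: ball_trans h1 (IH _ wb).
Qed.

Lemma path_ball x p : path e x p -> last x p \in ball e x (size p).
Proof.
elim: p x => [|y p IH] x /=.
  by move=> _; exact: (set11 x).
move=> /andP [exy /IH h].
have h1 : y \in ball e x 1 by apply: (@ball_step x x y 0); rewrite ?ball0 ?inE.
by have := ball_trans h1 h; rewrite add1n.
Qed.

Lemma ball_all x y : y \in ball e x #|T|.-1.
Proof.
have /connectP [p pp ->] := econ x y.
case: (shortenP pp) => q qp qu _.
apply: (subsetP (ball_mono _ _)); last exact: path_ball.
have h1 := card_uniqP qu; have h2 := max_card (mem (x :: q)).
rewrite h1 /= in h2. by case: #|T| h2.
Qed.

Lemma dist_le x y n : (dist e x y <= n) = (y \in ball e x n).
Proof.
rewrite /dist.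
have hex : has (fun k => y \in ball e x k) (iota 0 #|T|).
  apply/hasP; exists #|T|.-1; last exact: ball_all.
  rewrite mem_iota /= add0n.
  have := max_card (mem [:: x]); rewrite (card_uniqP _) //=.
  by case: #|T|.
have := has_find (fun k => y \in ball e x k) (iota 0 #|T|).
rewrite hex => /esym; rewrite size_iota => lt.
have hP := nth_find 0 hex. rewrite nth_iota // add0n in hP.
apply/idP/idP => [le|yb].
  by apply: (subsetP (ball_mono _ le)).
rewrite leqNgt; apply/negP => lt2.
have := before_find 0 lt2; rewrite nth_iota ?add0n ?yb //.
by apply: ltn_trans lt2 lt.
Qed.

Local Notation d := (dist e).

Lemma dist_ball x y : y \in ball e x (d x y).
Proof. by rewrite -dist_le. Qed.

Lemma dist0 x : d x x = 0.
Proof. by apply/eqP; rewrite -leqn0 dist_le ball0 inE. Qed.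

Lemma dist_eq0 x y : d x y = 0 -> x = y.
Proof. by move=> h; have := dist_ball x y; rewrite h ball0 inE => /eqP. Qed.

Lemma dist_sym x y : d x y = d y x.
Proof.
apply/eqP; rewrite eqn_leq; apply/andP; split; rewrite dist_le; apply: ball_sym; exact: dist_ball.
Qed.

Lemma dist_tri x y z : d x z <= d x y + d y z.
Proof. by rewrite dist_le; apply: ball_trans (dist_ball _ _) (dist_ball _ _). Qed.

Lemma dist_edge x y : e x y -> d x y = 1.
Proof.
move=> exy; apply/eqP; rewrite eqn_leq dist_le lt0n.
rewrite (@ball_step x x y 0) ?ball0 ?inE //=.
by apply/eqP => /dist_eq0 h; move: exy; rewrite h eirr.
Qed.

Lemma dist_edge_le w u v : e u v -> d w v <= d w u + 1.
Proof. by move=> /dist_edge <-; apply: dist_tri. Qed.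

Lemma dist_pred x y n : d x y = n.+1 -> exists2 z, e z y & d x z = n.
Proof.
move=> h; have := dist_ball x y; rewrite h ballS inE => /orP [|].
  by rewrite -dist_le h ltnn.
rewrite inE => /existsP [z /andP [zb ezy]]; exists z => //.
apply/eqP; rewrite eqn_leq dist_le zb /=.
by have := dist_edge_le x ezy; rewrite h addn1.
Qed.


Lemma dist1_edge x y : d x y = 1 -> e x y.
Proof. by move=> /dist_pred [z ezy /dist_eq0 hz]; rewrite hz. Qed.

Hypothesis med : median_graph e.

Local Notation I := (interval e).

Lemma inI x u v : (x \in I u v) = (d u x + d x v == d u v).
Proof. by rewrite inE. Qed.

Lemma I_sym x u v : (x \in I u v) = (x \in I v u).
Proof. by rewrite !inI addnC (dist_sym v u) (dist_sym u x) (dist_sym x v). Qed.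

Lemma med_ex x y z : exists m, [/\ m \in I x y, m \in I y z & m \in I z x].
Proof.
have /eqP /cards1P [m hm] := med x y z.
exists m; have : m \in I x y :&: I y z :&: I z x by rewrite hm set11.
by rewrite !inE -!andbA => /and3P [-> -> ->].
Qed.

Lemma med_uniq x y z m1 m2 :
  m1 \in I x y -> m1 \in I y z -> m1 \in I z x ->
  m2 \in I x y -> m2 \in I y z -> m2 \in I z x -> m1 = m2.
Proof.
move=> a1 b1 c1 a2 b2 c2.
have /eqP /cards1P [m hm] := med x y z.
have h1 : m1 \in I x y :&: I y z :&: I z x by rewrite !inE -!inI a1 b1 c1.
have h2 : m2 \in I x y :&: I y z :&: I z x by rewrite !inE -!inI a2 b2 c2.
by move: h1 h2; rewrite hm !inE => /eqP -> /eqP ->.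
Qed.

Lemma bip w u v : e u v -> d w u != d w v.
Proof.
move=> euv; have [m [h1 h2 h3]] := med_ex w u v.
move: h1 h2 h3; rewrite !inI (dist_edge euv) => /eqP h1 /eqP h2 /eqP h3.
have [hu|hv] : d u m = 0 \/ d m v = 0 by lia.
  move/dist_eq0: hu => hu; rewrite -hu in h3.
  move: h3; rewrite (dist_sym v u) (dist_sym v w) (dist_sym u w) (dist_edge euv); lia.
move/dist_eq0: hv => hv; rewrite hv in h1.
move: h1; rewrite (dist_sym v u) (dist_edge euv); lia.
Qed.

Lemma bip2 w u v : e u v -> d w v = (d w u).+1 \/ d w u = (d w v).+1.
Proof.
move=> euv; have := bip w euv; have := dist_edge_le w euv.
have := dist_edge_le w (_ : e v u) ; rewrite esymm => /(_ euv).
lia.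
Qed.

Lemma dist2 p q u : p != q -> e u p -> e u q -> d p q = 2.
Proof.
move=> npq eup euq.
have h1 : d p q <= 2 by have := dist_tri p u q; rewrite (dist_sym p u) (dist_edge eup) (dist_edge euq).
have h2 : d p q != 0 by apply/eqP => /dist_eq0 /eqP; rewrite (negbTE npq).
have h3 : d p q != 1.
  apply/eqP => h; have := bip p euq; rewrite h (dist_sym p u) (dist_edge eup) //.
lia.
Qed.

Lemma K23 u y p q r : u != y -> p != q -> q != r -> p != r ->
  e u p -> e p y -> e u q -> e q y -> e u r -> e r y -> False.
Proof.
move=> nuy npq nqr npr eup epy euq eqy eur ery.
have Ipq : forall a b c, a != b -> e c a -> e c b -> e a y -> e b y -> e c a ->
   (c \in I a b) && (y \in I a b).
  move=> a b c nab eca ecb eay eby _.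
  rewrite !inI (dist2 nab eca ecb) dist_sym (dist_edge eca) (dist_edge ecb).
  by rewrite (dist_edge eay) dist_sym (dist_edge eby).
have /andP [a1 a2] := Ipq _ _ _ npq eup euq epy eqy eup.
have /andP [b1 b2] := Ipq _ _ _ nqr euq eur eqy ery euq.
have /andP [c1 c2] : (u \in I r p) && (y \in I r p).
  by apply: Ipq => //; rewrite eq_sym.
by move: nuy; rewrite (med_uniq a1 b1 c1 a2 b2 c2) eqxx.
Qed.

Lemma quad w u y k : u != y -> d u y = 2 -> d w u = k -> d w y = k ->
  exists z, [/\ e u z, e z y & (d w z).+1 = k].
Proof.
move=> nuy duy dwu dwy; have [m [h1 h2 h3]] := med_ex w u y.
move: h1 h2 h3; rewrite !inI => /eqP h1 /eqP h2 /eqP h3.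
rewrite (dist_sym m u) dwu in h1; rewrite duy in h2.
rewrite (dist_sym y m) (dist_sym m w) (dist_sym y w) dwy in h3.
have hu : d u m != 0.
  apply/eqP => /dist_eq0 hu; move: h3; rewrite -hu duy; lia.
have hy : d m y != 0.
  apply/eqP => /dist_eq0 hy; move: h1; rewrite hy duy; lia.
exists m; split.
- by apply: dist1_edge; lia.
- by apply: dist1_edge; lia.
- lia.
Qed.

Definition W a b : {set T} := [set x | d x a < d x b].

Lemma inW x a b : (x \in W a b) = (d x a < d x b).
Proof. by rewrite inE. Qed.

Lemma W_compl a b x : e a b -> (x \in W b a) = ~~ (x \in W a b).
Proof.
move=> eab; rewrite !inW; have := bip2 x eab; lia.
Qed.

Lemma cycle_W u v y x w : cycle4 e u v y x -> w \in W u v -> w \in W x y.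
Proof.
move=> /and5P [euv evy eyx exu /andP [nuy nvx]].
rewrite !inW => h; apply/negPn/negP; rewrite -leqNgt => h2.
have := bip2 w eyx; have := bip2 w euv; have := bip2 w evy; have := bip2 w exu.
move=> hxu hvy huv hyx.
have hx : d w x = (d w y).+1 by lia.
have [hk|hk] : d w x = (d w u).+1 \/ (d w x).+1 = d w u by lia.
- have dy : d w y = d w u by lia.
  have duy : d u y = 2 by apply: (dist2 (u:=v) nuy _ evy); rewrite esymm.
  have [z [euz ezy hz]] := quad nuy duy (erefl _) dy.
  have nxz : x != z by apply/eqP => hxz; subst z; lia.
  have nvz : v != z by apply/eqP => hxz; subst z; lia.
  apply: (@K23 u y v x z nuy nvx nxz nvz) => //; by rewrite esymm.
- lia.
Qed.

Lemma W_complS a b : e a b -> W b a = ~: W a b.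
Proof. by move=> eab; apply/setP => x; rewrite in_setC W_compl. Qed.

Lemma cycle4_rev u v y x : cycle4 e u v y x -> cycle4 e x y v u.
Proof.
move=> /and5P [euv evy eyx exu /andP [nuy nvx]].
by rewrite /cycle4 (esymm x y) (esymm y v) (esymm v u) (esymm u x) eyx evy euv exu (eq_sym x v) nvx (eq_sym y u) nuy.
Qed.

Lemma cycle_WE u v y x : cycle4 e u v y x -> W u v = W x y.
Proof.
move=> c; apply/setP => w; apply/idP/idP; first exact: cycle_W.
exact: (cycle_W (cycle4_rev c)).
Qed.

Lemma opp_sym : symmetric (opp e).
Proof.
have h : forall E F, opp e E F -> opp e F E.
  move=> E F /existsP [u /existsP [v /existsP [y /existsP [x /and3P [c hE hF]]]]].
  apply/existsP; exists x; apply/existsP; exists y; apply/existsP; exists v.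
  apply/existsP; exists u; rewrite cycle4_rev //= hF.
  by move/eqP: hE => ->; rewrite eqxx.
by move=> E F; apply/idP/idP; apply: h.
Qed.

Lemma set2_eq (x y p q : T) : [set x; y] = [set p; q] ->
  (p = x /\ q = y) \/ (p = y /\ q = x).
Proof.
move=> h.
have hp : p \in [set x; y] by rewrite h set21.
have hq : q \in [set x; y] by rewrite h set22.
have hx : x \in [set p; q] by rewrite -h set21.
have hy : y \in [set p; q] by rewrite -h set22.
case/set2P: hp => hp; case/set2P: hq => hq; subst; auto.
- by case/set2P: hy => ->; auto.
- by case/set2P: hx => ->; auto.
Qed.

Lemma thetaW a b F : e a b -> connect (opp e) [set a; b] F ->
  forall p q, e p q -> F = [set p; q] -> W p q = W a b \/ W p q = W b a.
Proof.
move=> eab /connectP [s sp ->].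
elim/last_ind: s sp => [|s G IH].
  move=> _ p q epq /= /set2_eq [[-> ->]|[-> ->]]; first by left.
  by right.
rewrite rcons_path last_rcons => /andP [sp /existsP [u /existsP [v /existsP [y /existsP [x /and3P [c hE hF]]]]]].
move=> p q epq; move/eqP: hF => ->.
have euv : e u v by case/and5P: c.
have eyx : e y x by case/and5P: c.
have exy : e x y by rewrite esymm.
have hyx : W y x = ~: W u v by rewrite (W_complS exy) (cycle_WE c).
have hba : W b a = ~: W a b by rewrite (W_complS eab).
have [hw|hw] := IH sp u v euv (eqP hE).
  case/set2_eq => [[-> ->]|[-> ->]].
  - by left; rewrite -(cycle_WE c).
  - by right; rewrite hyx hw hba.
case/set2_eq => [[-> ->]|[-> ->]].
- by right; rewrite -(cycle_WE c).
- by left; rewrite hyx hw hba setCK.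
Qed.

Lemma crossW a b p q : e a b -> e p q -> connect (opp e) [set a; b] [set p; q] ->
  (p \in W a b) != (q \in W a b).
Proof.
move=> eab epq c.
have hp : p \in W p q by rewrite inW dist0 (dist_edge epq).
have hq : q \notin W p q by rewrite inW dist0 (dist_edge (_ : e q p)) // esymm.
have [h|h] := thetaW eab c epq (erefl _).
  by rewrite -h hp (negbTE hq).
rewrite (W_complS eab) in h; rewrite h !in_setC in hp hq.
by rewrite (negbTE hp); move: hq; rewrite negbK => ->.
Qed.

Lemma lip u v w : e u v -> d u w <= (d v w).+1 /\ d v w <= (d u w).+1.
Proof.
move=> euv; split.
  by have := dist_edge_le w (_ : e v u); rewrite (dist_sym u) (dist_sym v) addn1; apply; rewrite esymm.
by have := dist_edge_le w euv; rewrite (dist_sym u) (dist_sym v) addn1.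
Qed.

Lemma crossing_theta a b : e a b -> forall k p q, d p a = k ->
  p \in W a b -> q \notin W a b -> e p q ->
  connect (opp e) [set a; b] [set p; q].
Proof.
move=> eab; elim => [|k IH] p q dpa.
  move=> hp hq epq.
  move/dist_eq0: dpa => hpa; subst p.
  rewrite !inW in hp hq.
  have := bip2 q eab; have [l1 l2] := lip a epq; have [l3 l4] := lip b epq.
  move=> h; rewrite dist0 in l1 l2 l3 l4 hp.
  have : d q b = 0 by lia.
  by move/dist_eq0 => ->; apply: connect0.
move=> hp hq epq; rewrite !inW in hp hq.
have e0 : d a p = k.+1 by rewrite dist_sym.
have [p' ep'p dp'a] := dist_pred e0.
rewrite dist_sym in dp'a.
have [l1 l2] := lip a epq; have [l3 l4] := lip b epq.
have [l5 l6] := lip a ep'p; have [l7 l8] := lip b ep'p.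
have b1 := bip2 p eab; have b2 := bip2 q eab; have b3 := bip2 p' eab.
have dqb : d q b = k.+1 by lia.
have dp'b : d p' b = k.+1 by lia.
have np'q : p' != q by apply/eqP => h; subst p'; lia.
have d2 : d p' q = 2 by apply: (dist2 (u:=p) np'q) => //; rewrite esymm.
have e1 : d b p' = k.+1 by rewrite dist_sym.
have e2 : d b q = k.+1 by rewrite dist_sym.
have [z [ep'z ezq hz]] := quad np'q d2 e1 e2.
have [l9 l10] := lip a ezq; have [l11 l12] := lip a ep'z.
rewrite !(dist_sym b) in hz.
have b4 := bip2 z eab.
have dza : d z a = k.+1 by lia.
have IH' := IH p' z dp'a.
apply: (connect_trans (IH' _ _ ep'z)).
- by rewrite inW; lia.
- by rewrite inW; lia.
apply: connect1; apply/existsP; exists p'; apply/existsP; exists z.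
apply/existsP; exists q; apply/existsP; exists p.
rewrite !eqxx andbT andbT /cycle4 ep'z ezq (esymm q p) epq (esymm p p') ep'p np'q /=.
by apply/eqP => h; subst z; lia.
Qed.

Lemma W_convex a b : e a b -> forall x y z, x \in W a b -> y \in W a b ->
  z \in I x y -> z \in W a b.
Proof.
move=> eab.
suff H : forall n x z, d x z = n -> x \in W a b -> z \notin W a b ->
  forall y, z \in I x y -> y \notin W a b.
  move=> x y z hx hy hz; apply/negPn/negP => hz'.
  by have := H _ x z erefl hx hz' y hz; rewrite hy.
elim => [|n IH] x z dxz hx hz y.
  by move/dist_eq0: dxz => h; subst z; rewrite hx in hz.
rewrite inI => /eqP hI.
have e0 : d z x = n.+1 by rewrite dist_sym.
have [x1 ex1x dzx1] := dist_pred e0.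
rewrite dist_sym in dzx1.
have exx1 : e x x1 by rewrite esymm.
have t1 := dist_tri x1 z y; have t2 := dist_tri x x1 y.
rewrite (dist_sym x x1) (dist_edge ex1x) in t2.
have hI' : z \in I x1 y by rewrite inI dzx1; lia.
case hx1 : (x1 \in W a b); first exact: IH x1 z dzx1 hx1 hz y hI'.
have c := crossing_theta eab (erefl _) hx (negbT hx1) exx1.
have [h|h] := thetaW eab c exx1 (erefl _).
- rewrite -h inW; apply/negP => hlt.
  rewrite (dist_sym y x) (dist_sym y x1) in hlt; lia.
- have : x \in W x x1 by rewrite inW dist0 dist_edge // esymm.
  by rewrite h W_compl // hx.
Qed.

Lemma opp_csym : connect_sym (opp e).
Proof. exact: sym_connect_sym opp_sym. Qed.

Lemma theta_mem C F : is_theta e C -> F \in C -> C = theta_class e F.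
Proof.
move=> /existsP [E /andP [_ /eqP ->]].
rewrite inE => /andP [_ cEF].
apply/setP => G; rewrite !inE.
by rewrite (same_connect opp_csym cEF).
Qed.

Lemma is_edge2 p q : e p q -> is_edge e [set p; q].
Proof. by move=> epq; apply/existsP; exists p; apply/existsP; exists q; rewrite epq eqxx. Qed.

Lemma theta_cut C a w : is_theta e C -> e a w -> [set a; w] \in C ->
  forall p q, e p q -> ([set p; q] \in C) = ((p \in W a w) != (q \in W a w)).
Proof.
move=> tC eaw inC p q epq.
rewrite (theta_mem tC inC) inE is_edge2 //=.
apply/idP/idP; first exact: crossW.
case hp : (p \in W a w); case hq : (q \in W a w) => //= _.
  by have := crossing_theta eaw (erefl _) hp (negbT hq) epq.
have eqp : e q p by rewrite esymm.
by rewrite (setUC [set p]); have := crossing_theta eaw (erefl _) hq (negbT hp) eqp.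
Qed.

Lemma half_W C a w : is_theta e C -> e a w -> [set a; w] \in C ->
  Defs.half e C a = W a w.
Proof.
move=> tC eaw inC; apply/setP => z; rewrite inE.
have ha : a \in W a w by rewrite inW dist0 dist_edge.
apply/idP/idP.
  move=> cz.
  have cl : closed (del e C) (W a w).
    move=> x y /andP [exy nC].
    rewrite (theta_cut tC eaw inC exy) in nC.
    by move: nC; case: (x \in W a w); case: (y \in W a w).
  by rewrite -(closed_connect cl cz).
move=> hz.
suff H : forall n z, d a z = n -> z \in W a w -> connect (del e C) a z by exact: H _ _ erefl hz.
elim => [|n IH] {hz}z daz hz.
  by move/dist_eq0: daz => ->; apply: connect0.
have [z' ez'z daz'] := dist_pred daz.
have hz' : z' \in W a w.
  apply: (W_convex eaw ha hz); rewrite inI daz' (dist_edge ez'z) daz addn1 //.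
apply: connect_trans (IH _ daz' hz') (connect1 _).
by rewrite /del ez'z (theta_cut tC eaw inC ez'z) hz hz'.
Qed.

Definition convex (H : {set T}) :=
  forall x y z, x \in H -> y \in H -> z \in I x y -> z \in H.

Lemma convexI A B : convex A -> convex B -> convex (A :&: B).
Proof.
move=> cA cB x y z /setIP [xA xB] /setIP [yA yB] hz.
by apply/setIP; split; [exact: (cA x y z) | exact: (cB x y z)].
Qed.

Lemma W_convexS a b : e a b -> convex (W a b).
Proof. by move=> eab x y z; apply: W_convex. Qed.

Lemma convex_gated H : H != set0 -> convex H -> gated e H.
Proof.
move=> /set0Pn [g0 g0H] cH v.
case: (@arg_minnP _ g0 (mem H) (fun g => d v g) g0H) => g gH gmin.
exists g => // x xH.
have [m [h1 h2 h3]] := med_ex v g x.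
have mH : m \in H by apply: (cH g x).
have := gmin m mH; move: h1; rewrite inI => /eqP h1 h4.
have : d m g = 0 by lia.
move/dist_eq0 => hm; subst m.
by rewrite I_sym.
Qed.

Lemma helly3 A B C a b c : convex A -> convex B -> convex C ->
  a \in A -> a \in B -> b \in B -> b \in C -> c \in C -> c \in A ->
  exists x, [/\ x \in A, x \in B & x \in C].
Proof.
move=> cA cB cC aA aB bB bC cC' cA'.
have [m [h1 h2 h3]] := med_ex a b c.
by exists m; split; [apply: (cA c a) | apply: (cB a b) | apply: (cC b c)].
Qed.

Lemma helly (x0 : T) (s : seq {set T}) :
  (forall A, A \in s -> convex A) ->
  (forall A B, A \in s -> B \in s -> A :&: B != set0) ->
  exists x, forall A, A \in s -> x \in A.
Proof.
move: {2}(size s) (erefl (size s)) => n.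
elim: n s => [|n IH] [|A s] //=; try by move=> _ _ _; exists x0.
case=> hs cs ps.
case: s hs cs ps => [|B s] hs cs ps.
  have /set0Pn [x] := ps A A (mem_head _ _) (mem_head _ _).
  by rewrite inE => /andP [xA _]; exists x => C; rewrite inE => /eqP ->.
set s' := [seq A :&: C | C <- B :: s].
have [x hx] : exists x, forall C, C \in s' -> x \in C.
  apply: (IH s'); first by rewrite size_map.
    move=> C /mapP [C' C's ->]; apply: convexI; apply: cs; rewrite inE ?eqxx ?C's ?orbT //.
  move=> C1 C2 /mapP [D1 D1s ->] /mapP [D2 D2s ->].
  have hA : A \in A :: B :: s by rewrite mem_head.
  have h1 : D1 \in A :: B :: s by rewrite inE D1s orbT.
  have h2 : D2 \in A :: B :: s by rewrite inE D2s orbT.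
  have /set0Pn [a] := ps _ _ hA h1; rewrite inE => /andP [aA aD1].
  have /set0Pn [b] := ps _ _ h1 h2; rewrite inE => /andP [bD1 bD2].
  have /set0Pn [c] := ps _ _ h2 hA; rewrite inE => /andP [cD2 cA].
  have [y [yA yD1 yD2]] := helly3 (cs _ hA) (cs _ h1) (cs _ h2) aA aD1 bD1 bD2 cD2 cA.
  by apply/set0Pn; exists y; rewrite !inE yA yD1 yD2.
exists x => C; rewrite inE => /orP [/eqP ->|Cs].
  by have := hx (A :&: B) (mem_head _ _); rewrite inE => /andP [].
have : x \in A :&: C by apply: hx; apply/mapP; exists C.
by rewrite inE => /andP [].
Qed.

Lemma cut_in C a w p q : is_theta e C -> e a w -> [set a; w] \in C -> e p q ->
  [set p; q] \in C -> (q \in W a w) = ~~ (p \in W a w).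
Proof.
move=> tC eaw inC epq; rewrite (theta_cut tC eaw inC epq).
by case: (p \in W a w); case: (q \in W a w).
Qed.

Lemma cut_out C a w p q : is_theta e C -> e a w -> [set a; w] \in C -> e p q ->
  [set p; q] \notin C -> (q \in W a w) = (p \in W a w).
Proof.
move=> tC eaw inC epq; rewrite (theta_cut tC eaw inC epq).
by case: (p \in W a w); case: (q \in W a w).
Qed.

Lemma ladder_mem C a w z : is_theta e C -> e a w -> [set a; w] \in C ->
  (C \in ladder e a z) = (z \notin W a w).
Proof.
move=> tC eaw inC.
have hex : [exists w, e a w && ([set a; w] \in C)].
  by apply/existsP; exists w; rewrite eaw inC.
rewrite inE tC hex andbT /=.
have := half_W tC eaw inC; move/setP => /(_ z); rewrite inE => ->.
by [].
Qed.

Lemma ladder_out C a z : ~~ (is_theta e C && [exists w, e a w && ([set a; w] \in C)]) ->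
  C \notin ladder e a z.
Proof.
rewrite inE; apply: contra => /and3P [-> _ ->] //.
Qed.

Lemma W_same a b x y z : e a b -> (x \in W a b) = (y \in W a b) -> z \in I x y ->
  (z \in W a b) = (x \in W a b).
Proof.
move=> eab hxy hz; case hx : (x \in W a b); rewrite hx in hxy.
  exact: (W_convex eab hx (esym hxy) hz).
apply/negbTE; rewrite -(W_compl _ eab).
apply: (W_convex (_ : e b a) _ _ hz); first by rewrite esymm.
  by rewrite W_compl // hx.
by rewrite W_compl // -hxy.
Qed.

Lemma theta_same C D F : is_theta e C -> is_theta e D -> F \in C -> F \in D -> C = D.
Proof. by move=> tC tD FC FD; rewrite (theta_mem tC FC) (theta_mem tD FD). Qed.

Lemma main_sec v0 (L : {set {set {set T}}}) :
  L != set0 -> POF e L ->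
  (forall C, C \in L -> exists w, e v0 w && ([set v0; w] \in C)) ->
  VL e v0 L != set0 /\ gated e (VL e v0 L).
Proof.
move=> Lne [Lth Lorth] Linc.
pose Dset := [set D : {set {set T}} | is_theta e D &&
                [exists w, e v0 w && ([set v0; w] \in D)]].
have inD : forall D, D \in Dset -> exists2 w, e v0 w & [set v0; w] \in D /\ is_theta e D.
  move=> D; rewrite inE => /andP [tD /existsP [w /andP [ew wD]]].
  by exists w.
have LD : forall C, C \in L -> C \in Dset.
  move=> C CL; rewrite inE Lth //=; have [w hw] := Linc C CL.
  by apply/existsP; exists w.
have nv0 : forall z, ladder e v0 z = L -> z != v0.
  move=> z hl.
  have /set0Pn [C CL] := Lne.
  have [w ew [wC tC]] := inD C (LD C CL).
  apply/eqP => hz0; move: CL; rewrite -hl hz0 (ladder_mem _ tC ew wC).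
  by rewrite inW dist0 dist_edge.
have VLconv : convex (VL e v0 L).
  move=> x y z hx' hy' hz; move: hx' hy'; rewrite !inE => /andP [_ /eqP hx] /andP [_ /eqP hy].
  have hl : ladder e v0 z = L.
    apply/setP => C; rewrite -hx.
    case hC : (C \in Dset); last first.
      have h : ~~ (is_theta e C && [exists w, e v0 w && ([set v0; w] \in C)]).
        by rewrite inE in hC; rewrite hC.
      by rewrite (negbTE (ladder_out z h)) (negbTE (ladder_out x h)).
    have [w ew [wC tC]] := inD C hC.
    rewrite (ladder_mem z tC ew wC) (ladder_mem x tC ew wC); congr negb.
    apply: (W_same ew _ hz).
    have := ladder_mem x tC ew wC; have := ladder_mem y tC ew wC.
    rewrite hx hy => -> /negb_inj.
    by [].
  rewrite hl eqxx andbT; exact: nv0.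
pose X := fun D => if D \in L then ~: Defs.half e D v0 else Defs.half e D v0.
have XW : forall D w, is_theta e D -> e v0 w -> [set v0; w] \in D -> forall x,
    (x \in X D) = if D \in L then x \notin W v0 w else x \in W v0 w.
  move=> D w tD ew wD x; rewrite /X; case: (D \in L); by rewrite ?in_setC (half_W tD ew wD).
have Xconv : forall D, D \in Dset -> convex (X D).
  move=> D /inD [w ew [wD tD]] a b c ha hb hc.
  move: ha hb; rewrite !(XW D w tD ew wD); case: (D \in L) => ha hb.
    have ew' : e w v0 by rewrite esymm.
    rewrite -(W_compl a ew) in ha; rewrite -(W_compl b ew) in hb; rewrite -(W_compl c ew).
    exact: (W_convex ew' ha hb hc).
  exact: (W_convex ew ha hb hc).
have mixed : forall D1 D2, D1 \in Dset -> D2 \in Dset -> D1 \in L -> D2 \notin L ->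
    exists x, x \in X D1 :&: X D2.
  move=> D1 D2 /inD [w1 ew1 [wD1 tD1]] /inD [w2 ew2 [wD2 tD2]] h1 h2.
  exists w1; rewrite inE (XW D1 w1 tD1 ew1 wD1) (XW D2 w2 tD2 ew2 wD2) h1 (negbTE h2).
  rewrite inW dist0 ltn0 /=.
  have nin : [set v0; w1] \notin D2.
    apply/negP => hin; have := theta_same tD1 tD2 wD1 hin.
    by move=> hD; move: h1; rewrite hD (negbTE h2).
  by rewrite (cut_out tD2 ew2 wD2 ew1 nin) inW dist0 dist_edge.
have pair : forall D1 D2, D1 \in Dset -> D2 \in Dset -> exists x, x \in X D1 :&: X D2.
  move=> D1 D2 hD1 hD2.
  case h1 : (D1 \in L); case h2 : (D2 \in L).
  - have [w1 ew1 [wD1 tD1]] := inD _ hD1; have [w2 ew2 [wD2 tD2]] := inD _ hD2.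
    case: (eqVneq D1 D2) => [<-|neq].
      exists w1; rewrite setIid (XW D1 w1 tD1 ew1 wD1) h1.
      by rewrite inW dist0 ltn0.
    have := Lorth _ _ h1 h2 neq.
    move=> /existsP [u /existsP [v /existsP [y /existsP [x /and5P [c uv1 xy1 ux2 vy2]]]]].
    have c' := c; move/and5P: c' => [euv evy eyx exu _].
    have exy : e x y by rewrite esymm.
    have eux : e u x by rewrite esymm.
    have nux1 : [set u; x] \notin D1.
      by apply/negP => h; move: neq; rewrite (theta_same tD1 tD2 h ux2) eqxx.
    have nvy1 : [set v; y] \notin D1.
      by apply/negP => h; move: neq; rewrite (theta_same tD1 tD2 h vy2) eqxx.
    have nuv2 : [set u; v] \notin D2.
      by apply/negP => h; move: neq; rewrite (theta_same tD1 tD2 uv1 h) eqxx.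
    have nxy2 : [set x; y] \notin D2.
      by apply/negP => h; move: neq; rewrite (theta_same tD1 tD2 xy1 h) eqxx.
    have a1 := cut_in tD1 ew1 wD1 euv uv1.
    have a2 := cut_out tD1 ew1 wD1 evy (_ : [set v; y] \notin D1).
    have a3 := cut_out tD1 ew1 wD1 eux nux1.
    have b1 := cut_out tD2 ew2 wD2 euv nuv2.
    have b2 := cut_in tD2 ew2 wD2 evy vy2.
    have b3 := cut_in tD2 ew2 wD2 eux ux2.
    have a2' := a2 nvy1.
    have X1 : forall z, (z \in X D1) = (z \notin W v0 w1) by move=> z; rewrite (XW D1 w1 tD1 ew1 wD1) h1.
    have X2 : forall z, (z \in X D2) = (z \notin W v0 w2) by move=> z; rewrite (XW D2 w2 tD2 ew2 wD2) h2.
    case hu1 : (u \in W v0 w1); case hu2 : (u \in W v0 w2).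
    + by exists y; rewrite inE X1 X2 a2' a1 hu1 (cut_out tD2 ew2 wD2 exy nxy2) b3 hu2.
    + by exists v; rewrite inE X1 X2 a1 hu1 b1 hu2.
    + by exists x; rewrite inE X1 X2 a3 hu1 b3 hu2.
    + by exists u; rewrite inE X1 X2 hu1 hu2.
  - exact: mixed _ _ hD1 hD2 h1 (negbT h2).
  - by have [x hx] := mixed _ _ hD2 hD1 h2 (negbT h1); exists x; rewrite setIC.
  - exists v0; rewrite inE /X h1 h2 !inE.
    by rewrite !connect0.
have H1 : forall A, A \in [seq X D | D <- enum Dset] -> convex A.
  by move=> A /mapP [D hD ->]; apply: Xconv; rewrite -mem_enum.
have H2 : forall A B, A \in [seq X D | D <- enum Dset] -> B \in [seq X D | D <- enum Dset] -> A :&: B != set0.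
  move=> A B /mapP [D1 hD1 ->] /mapP [D2 hD2 ->].
  rewrite !mem_enum in hD1 hD2.
  by have [y hy] := pair _ _ hD1 hD2; apply/set0Pn; exists y.
have [x hx] := helly v0 H1 H2.
have hxD : forall D, D \in Dset -> x \in X D.
  by move=> D hD; apply: hx; apply/mapP; exists D; rewrite ?mem_enum.
have hl : ladder e v0 x = L.
  apply/setP => C.
  case hC : (C \in Dset); last first.
    have h : ~~ (is_theta e C && [exists w, e v0 w && ([set v0; w] \in C)]).
      by rewrite inE in hC; rewrite hC.
    rewrite (negbTE (ladder_out x h)).
    by apply/esym/negbTE; apply: contraFN hC; apply: LD.
  have [w ew [wC tC]] := inD C hC.
  have := hxD C hC; rewrite (ladder_mem x tC ew wC) (XW C w tC ew wC).
  by case: (C \in L) => // ->.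
have xVL : x \in VL e v0 L by rewrite inE hl eqxx andbT nv0.
have ne : VL e v0 L != set0 by apply/set0Pn; exists x.
by split => //; apply: convex_gated.
Qed.
End Dist.

Theorem mainTheorem11 (T : finType) (e : rel T) (v0 : T)
  (L : {set {set {set T}}}) :
  irreflexive e -> symmetric e -> (forall x y : T, connect e x y) ->
  median_graph e -> 3 <= #|T| -> U3 e -> in_all_majority e v0 ->
  L != set0 -> POF e L ->
  (forall C, C \in L -> exists w, e v0 w && ([set v0; w] \in C)) ->
  VL e v0 L != set0 /\ gated e (VL e v0 L).
Proof.
move=> eirr esymm econ med _ _ _ Lne hP hinc.
exact: (main_sec eirr esymm econ med Lne hP hinc).
Qed.
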